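(* Let $S_t$ be the state at time $t$ of a $d$-dimensional Hegselmann–Krause system with social network $G=(V,E)$ and confidence bound $\varepsilon>0$. Suppose agent $v$ is updated in step $t$ (so it moves by $m_v(t)$), producing the state $S_{t+1}$. Then $$\Phi(S_t)-\Phi(S_{t+1})\ \ge\ (|N_v(t)|+1)\,\|m_v(t)\|_2^2,$$ with equality if the influence network in $S_{t+1}$ equals the influence network in $S_t$.
   Context: A $d$-dimensional Hegselmann–Krause system has a finite undirected graph $G=(V,E)$ (social network), a confidence bound $\varepsilon>0$, and positions $x_v(t)\in\mathbb{R}^d$ at time $t$. The influencing neighborhood is $N_v(t)=\{u:\{u,v\}\in E,\ \|x_u(t)-x_v(t)\|_2\le\varepsilon\}\cup\{v\}$, the movement is $m_v(t)=\frac{1}{|N_v(t)|}\sum_{u\in N_v(t)}(x_u(t)-x_v(t))$, and the influence network at time $t$ is $(V,E_I(t))$ with $E_I(t)=\{\{u,v\}\in E:\|x_u(t)-x_v(t)\|_2\le\varepsilon\}$. Updating $v$ in step $t$ means $x_v(t+1)=x_v(t)+m_v(t)$ and $x_u(t+1)=x_u(t)$ for $u\ne v$. The potential of a state $S$ with positions $x$ is $\Phi(S)=\sum_{\{u,v\}\in E}\min\{\|x_u-x_v\|_2^2,\varepsilon^2\}$. *)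

(* Defs.v *)
From HB Require Import structures.
From mathcomp Require Import all_boot all_order all_algebra.
From mathcomp Require Import reals.
Set Implicit Arguments. Unset Strict Implicit. Unset Printing Implicit Defensive.
Import Order.TTheory GRing.Theory Num.Theory.
Local Open Scope ring_scope.

Section HK.
Variables (R : realType) (d : nat) (V : finType).

Definition norm2 (y : 'rV[R]_d) : R := Num.sqrt (\sum_(i < d) (y 0 i) ^+ 2).

Definition simple_graph (E : rel V) : Prop := symmetric E /\ irreflexive E.

Definition influence (E : rel V) (eps : R) (x : V -> 'rV[R]_d) : rel V :=
  fun u w => E u w && (norm2 (x u - x w) <= eps).

Definition nbhd (E : rel V) (eps : R) (x : V -> 'rV[R]_d) (v : V) : {set V} :=
  [set u | influence E eps x u v || (u == v)].

Definition movement (E : rel V) (eps : R) (x : V -> 'rV[R]_d) (v : V) : 'rV[R]_d :=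
  (#|nbhd E eps x v|%:R)^-1 *: \sum_(u in nbhd E eps x v) (x u - x v).

Definition update (E : rel V) (eps : R) (x : V -> 'rV[R]_d) (v : V) : V -> 'rV[R]_d :=
  fun u => if u == v then x v + movement E eps x v else x u.

(* potential: sum over unordered edges {u,w} of min(||x_u-x_w||^2, eps^2);
   since E is symmetric and irreflexive, each unordered edge is counted twice
   in the ordered double sum, hence the factor 1/2. *)
Definition potential (E : rel V) (eps : R) (x : V -> 'rV[R]_d) : R :=
  2^-1 * \sum_(u : V) \sum_(w : V | E u w)
            Num.min (norm2 (x u - x w) ^+ 2) (eps ^+ 2).

End HK.

(* Main.v *)
Require Import Defs.
From HB Require Import structures.
From mathcomp Require Import all_boot all_order all_algebra.
From mathcomp Require Import reals.
From mathcomp Require Import lra ring.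
Import Order.TTheory GRing.Theory Num.Theory.
Local Open Scope ring_scope.
Set Implicit Arguments. Unset Strict Implicit. Unset Printing Implicit Defensive.

Definition sq (R : realType) (d : nat) (a : 'rV[R]_d) : R :=
  \sum_(i < d) (a 0 i) ^+ 2.

Lemma sq_ge0 (R : realType) (d : nat) (a : 'rV[R]_d) : 0 <= sq a.
Proof. by apply: sumr_ge0 => i _; exact: sqr_ge0. Qed.

Lemma norm2_sq (R : realType) (d : nat) (a : 'rV[R]_d) : norm2 a ^+ 2 = sq a.
Proof. by rewrite /norm2 sqr_sqrtr //; exact: sq_ge0. Qed.

Lemma norm2_le (R : realType) (d : nat) (a : 'rV[R]_d) (eps : R) :
  0 <= eps -> (norm2 a <= eps) = (sq a <= eps ^+ 2).
Proof.
move=> he; rewrite -norm2_sq ler_sqr //.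
  by rewrite nnegrE /norm2 sqrtr_ge0.
Qed.

Lemma norm2_opp (R : realType) (d : nat) (a : 'rV[R]_d) : norm2 (- a) = norm2 a.
Proof. by rewrite /norm2; congr Num.sqrt; apply: eq_bigr => i _; rewrite mxE sqrrN. Qed.

Lemma norm2_sym (R : realType) (d : nat) (a b : 'rV[R]_d) : norm2 (a - b) = norm2 (b - a).
Proof. by rewrite -norm2_opp opprB. Qed.

Theorem lemma3 (R : realType) (d : nat) (V : finType) (E : rel V) (eps : R)
  (x : V -> 'rV[R]_d) (v : V) :
  simple_graph E -> 0 < eps ->
  (#|nbhd E eps x v|%:R + 1) * norm2 (movement E eps x v) ^+ 2
    <= potential E eps x - potential E eps (update E eps x v) /\
  (influence E eps (update E eps x v) =2 influence E eps x ->
   potential E eps x - potential E eps (update E eps x v)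
     = (#|nbhd E eps x v|%:R + 1) * norm2 (movement E eps x v) ^+ 2).
Proof.
move=> [Esym Eirr] epos.
have e0 : 0 <= eps by exact: ltW.
set N := nbhd E eps x v.
set m := movement E eps x v.
set x' := update E eps x v.
set n := #|N|.
have x'v : x' v = x v + m by rewrite /x' /update eqxx.
have x'u : forall u, u != v -> x' u = x u by move=> u /negbTE hu; rewrite /x' /update hu.
set F := fun (y : V -> 'rV[R]_d) u w => Num.min (norm2 (y u - y w) ^+ 2) (eps ^+ 2).
set D := fun u w => F x u w - F x' u w.
have Dsym : forall u w, D u w = D w u.
  by move=> u w; rewrite /D /F norm2_sym [norm2 (x' u - _)]norm2_sym.
have D0 : forall u w, u != v -> w != v -> D u w = 0.
  by move=> u w hu hw; rewrite /D /F !x'u // subrr.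
have pot : potential E eps x - potential E eps x' = \sum_(w | E v w) D v w.
  rewrite /potential -mulrBr -sumrB.
  have -> : \sum_i (\sum_(w | E i w) Num.min (norm2 (x i - x w) ^+ 2) (eps ^+ 2) -
       \sum_(w | E i w) Num.min (norm2 (x' i - x' w) ^+ 2) (eps ^+ 2)) =
       \sum_i \sum_(w | E i w) D i w.
    by apply: eq_bigr => i _; rewrite -sumrB.
  rewrite (bigD1 v) //=.
  have -> : \sum_(i | i != v) \sum_(w | E i w) D i w = \sum_(i | E v i) D v i.
    transitivity (\sum_(i | i != v) (if E i v then D i v else 0)).
      apply: eq_bigr => i hi; case: ifP => hiv.
        rewrite (bigD1 v) //= big1 ?addr0 // => w /andP [_ hw]; exact: D0.
      apply: big1 => w hw; apply: D0 => //; apply/negP => /eqP ew; subst w.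
      by rewrite hiv in hw.
    rewrite -big_mkcondr; apply: eq_big => [i|i /andP [_ h]]; last exact: Dsym.
    rewrite Esym; case h: (E v i); rewrite ?andbF ?andbT //.
    by apply/negP => /eqP ei; rewrite ei Eirr in h.
  lra.
have hn : (0 < n)%N by apply/card_gt0P; exists v; rewrite inE eqxx orbT.
set g := fun w => sq (x v - x w) - sq (x v + m - x w).
have key : \sum_(w in N) g w = n%:R * sq m.
  rewrite /g /sq; under eq_bigr => w _ do rewrite -sumrB.
  rewrite exchange_big /= mulr_sumr; apply: eq_bigr => i _.
  set mi := m 0 i.
  have hm : mi = n%:R^-1 * \sum_(w in N) (x w 0 i - x v 0 i).
    rewrite /mi /m /movement mxE summxE -/N -/n; f_equal; apply: eq_bigr => w _; by rewrite !mxE.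
  have hs : \sum_(w in N) (x w 0 i - x v 0 i) = n%:R * mi.
    by rewrite hm mulrA mulfV ?mul1r // pnatr_eq0 -lt0n.
  transitivity (\sum_(w in N) (2 * mi * (x w 0 i - x v 0 i) - mi ^+ 2)).
    apply: eq_bigr => w _.
    have em : (x v + m - x w) 0 i = x v 0 i + mi - x w 0 i by rewrite /mi !mxE.
    rewrite em !mxE; ring.
  rewrite sumrB -mulr_sumr hs sumr_const -/n -mulr_natl; ring.
set P := fun w => influence E eps x w v.
have hP : forall w, E v w -> P w = (sq (x v - x w) <= eps ^+ 2).
  by move=> w hw; rewrite /P /influence Esym hw /= norm2_sym norm2_le.
have wv : forall w, E v w -> w != v.
  by move=> w hw; apply/negP => /eqP ew; rewrite ew Eirr in hw.
have hD : forall w, E v w ->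
   D v w = Num.min (sq (x v - x w)) (eps ^+ 2) - Num.min (sq (x v + m - x w)) (eps ^+ 2).
  by move=> w hw; rewrite /D /F x'v x'u ?wv // !norm2_sq.
have low : forall w, E v w -> (if P w then g w else 0) <= D v w.
  move=> w hw; rewrite hD // hP // /g.
  have := sq_ge0 (x v + m - x w).
  case: (leP (sq (x v - x w)) (eps ^+ 2)) => h1;
  case: (leP (sq (x v + m - x w)) (eps ^+ 2)) => h2 h3;
  rewrite ?(min_l (ltW _)) ?(min_r (ltW _)) ?min_l ?min_r //; try lra.
have sumeq : \sum_(w | E v w) (if P w then g w else 0) = (n%:R + 1) * sq m.
  rewrite -big_mkcondr.
  have -> : \sum_(w | E v w && P w) g w = \sum_(w in N | w != v) g w.
    apply: eq_bigl => w; rewrite inE; case: (eqVneq w v) => [->|hw].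
      by rewrite Eirr andbF.
    rewrite orbF andbT -/(P w); case hPw: (P w); rewrite ?andbF ?andbT //.
    by move: hPw; rewrite /P /influence Esym => /andP [].
  have := key; rewrite (bigD1 v) ?inE ?eqxx ?orbT //= => k.
  have gv : g v = - sq m.
    rewrite /g subrr (addrC (x v) m) addrK /sq big1 ?sub0r // => i _; rewrite mxE expr0n.
    done.
  lra.
rewrite norm2_sq pot; split.
  by rewrite -sumeq; apply: ler_sum => w hw; exact: low.
move=> hinf; rewrite -sumeq; apply: eq_bigr => w hw.
have := hinf w v; rewrite /influence Esym hw /= x'v x'u ?wv // norm2_sym.
rewrite [norm2 (x w - x v)]norm2_sym !norm2_le // -hP // => hh.
rewrite hP // in hh; rewrite hD // /g hP //.
case: (leP (sq (x v - x w)) (eps ^+ 2)) => h1.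
  by rewrite !min_l // hh.
rewrite min_r ?subrr //; apply: ltW.
by rewrite ltNge hh -ltNge.
Qed.
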